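(* There is a pseudo-double functor $\mathbb{E}\mathbf{ff}\to\mathbb{C}\mathbf{at}^\sharp$ which is the identity on objects and vertical morphisms, sends a $(c,d)$-effects handler $(s,\varphi)$ to the $(c,d)$-bicomodule with carrier $s\triangleleft d$, left coaction $(\varphi\triangleleft d)\circ(s\triangleleft\delta_d)\colon s\triangleleft d\to c\triangleleft s\triangleleft d$ and right coaction $s\triangleleft\delta_d\colon s\triangleleft d\to s\triangleleft d\triangleleft d$, and sends a square $\gamma\colon s\to s'$ over cofunctors $\alpha\colon c\to c'$, $\beta\colon d\to d'$ to the bicomodule map $\gamma\triangleleft\beta\colon s\triangleleft d\to s'\triangleleft d'$. This pseudo-double functor is faithful on the category of horizontal morphisms and squares between nonempty categories (i.e. $d\neq 0$). Moreover every $(c,0)$-bicomodule and every $(c,\mathcal{y})$-bicomodule lies in its essential image.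
   Context: Polynomials $p=\sum_{I\in p(1)}\mathcal{y}^{p[I]}$ form $\mathbf{Poly}$ with composition $\triangleleft$ of polynomial functors, unit $\mathcal{y}$ (one position, one direction); $0$ is the polynomial with no positions. Comonoids $(c,\epsilon_c\colon c\to\mathcal{y},\delta_c\colon c\to c\triangleleft c)$ in $(\mathbf{Poly},\mathcal{y},\triangleleft)$ are small categories; homomorphisms are cofunctors. A $(c,d)$-bicomodule is a polynomial with compatible coassociative counital coactions $p\to c\triangleleft p$, $p\to p\triangleleft d$. $\mathbb{C}\mathbf{at}^\sharp$ is the pseudo-double category with objects comonoids, vertical morphisms comonoid homomorphisms, horizontal morphisms bicomodules (composition $p\triangleleft_dq$ is the equalizer of $p\triangleleft q\rightrightarrows p\triangleleft d\triangleleft q$; identity on $c$ is $c$ with both coactions $\delta_c$), squares polynomial maps compatible with coactions and the vertical cofunctors. Effects handlers: for comonoids $c,d$, a $(c,d)$-effects handler is a polynomial $s$ with a morphism $\varphi\colon s\triangleleft d\to c\triangleleft s$ such that $(\epsilon_c\triangleleft s)\circ\varphi=s\triangleleft\epsilon_d$ and $(\delta_c\triangleleft s)\circ\varphi=(c\triangleleft\varphi)\circ(\varphi\triangleleft d)\circ(s\triangleleft\delta_d)$. The pseudo-double category $\mathbb{E}\mathbf{ff}$ has objects comonoids, vertical morphisms comonoid homomorphisms, horizontal morphisms from $c$ to $d$ the $(c,d)$-effects handlers, horizontal composite of $(s,\varphi)\colon(c,d)$ and $(t,\psi)\colon(d,e)$ the handler $s\triangleleft t$ with structure map $s\triangleleft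 t\triangleleft e\xrightarrow{s\triangleleft\psi}s\triangleleft d\triangleleft t\xrightarrow{\varphi\triangleleft t}c\triangleleft s\triangleleft t$, horizontal identity $(\mathcal{y},\mathrm{id}_c)$, and squares from $(s,\varphi)$ to $(s',\varphi')$ over $\alpha\colon c\to c'$, $\beta\colon d\to d'$ the polynomial maps $\gamma\colon s\to s'$ with $(\alpha\triangleleft\gamma)\circ\varphi=\varphi'\circ(\gamma\triangleleft\beta)$. *)

(* Defs.v *)
(** * Polynomials  p = sum_{I in p(1)} y^{p[I]} *)
Record poly : Type := Poly { pos : Type; dir : pos -> Type }.

Record pmap (p q : poly) : Type := PMap {
  mpos : pos p -> pos q;
  mdir : forall i : pos p, dir q (mpos i) -> dir p i }.
Arguments mpos {p q} _ _.
Arguments mdir {p q} _ _ _.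
Arguments PMap {p q} & mpos mdir.

Definition pid (p : poly) : pmap p p :=
  {| mpos := fun i => i; mdir := fun i d => d |}.

Definition pcomp {p q r : poly} (g : pmap q r) (f : pmap p q) : pmap p r :=
  {| mpos := fun i => mpos g (mpos f i);
     mdir := fun i d => mdir f i (mdir g (mpos f i) d) |}.

Declare Scope poly_scope.
Delimit Scope poly_scope with poly.
Open Scope poly_scope.
Infix "∘" := pcomp (at level 40, left associativity) : poly_scope.

Definition ypoly : poly := {| pos := unit; dir := fun _ => unit |}.
Definition zpoly : poly :=
  {| pos := Empty_set; dir := fun e => match e return Type with end |}.

Definition tri (p q : poly) : poly :=
  {| pos := {i : pos p & dir p i -> pos q};
     dir := fun x => {a : dir p (projT1 x) & dir q (projT2 x a)} |}.
Infix "◁" := tri (at level 35, right associativity) : poly_scope.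

Definition tri_map {p p' q q' : poly} (f : pmap p p') (g : pmap q q')
  : pmap (p ◁ q) (p' ◁ q') :=
  {| mpos := fun x : pos (p ◁ q) =>
       existT (fun i' => dir p' i' -> pos q') (mpos f (projT1 x))
              (fun a' => mpos g (projT2 x (mdir f (projT1 x) a')));
     mdir := fun (x : pos (p ◁ q)) e =>
       existT (fun a => dir q (projT2 x a)) (mdir f (projT1 x) (projT1 e))
              (mdir g _ (projT2 e)) |}.
Infix "⊲" := tri_map (at level 35, right associativity) : poly_scope.

Definition assoc (p q r : poly) : pmap ((p ◁ q) ◁ r) (p ◁ (q ◁ r)) :=
  {| mpos := fun x : pos ((p ◁ q) ◁ r) =>
       existT (fun i => dir p i -> pos (q ◁ r)) (projT1 (projT1 x))
         (fun a => existT (fun j => dir q j -> pos r) (projT2 (projT1 x) a)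
                     (fun b => projT2 x (existT _ a b)));
     mdir := fun (x : pos ((p ◁ q) ◁ r)) e =>
       existT (fun y => dir r (projT2 x y))
         (existT (fun a => dir q (projT2 (projT1 x) a)) (projT1 e) (projT1 (projT2 e)))
         (projT2 (projT2 e)) |}.

Definition assoc_inv (p q r : poly) : pmap (p ◁ (q ◁ r)) ((p ◁ q) ◁ r) :=
  {| mpos := fun x : pos (p ◁ (q ◁ r)) =>
       existT (fun ih => dir (p ◁ q) ih -> pos r)
         (existT (fun i => dir p i -> pos q) (projT1 x) (fun a => projT1 (projT2 x a)))
         (fun y => projT2 (projT2 x (projT1 y)) (projT2 y));
     mdir := fun (x : pos (p ◁ (q ◁ r))) e =>
       existT (fun a => dir (q ◁ r) (projT2 x a)) (projT1 (projT1 e))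
         (existT (fun b => dir r (projT2 (projT2 x (projT1 (projT1 e))) b))
            (projT2 (projT1 e)) (projT2 e)) |}.

Definition lunit (p : poly) : pmap (ypoly ◁ p) p :=
  {| mpos := fun x : pos (ypoly ◁ p) => projT2 x tt;
     mdir := fun (x : pos (ypoly ◁ p)) d => existT (fun u => dir p (projT2 x u)) tt d |}.
Definition lunit_inv (p : poly) : pmap p (ypoly ◁ p) :=
  {| mpos := fun i => existT (fun u : unit => unit -> pos p) tt (fun _ => i);
     mdir := fun i e => projT2 e |}.
Definition runit (p : poly) : pmap (p ◁ ypoly) p :=
  {| mpos := fun x : pos (p ◁ ypoly) => projT1 x;
     mdir := fun (x : pos (p ◁ ypoly)) a => existT (fun _ => unit) a tt |}.
Definition runit_inv (p : poly) : pmap p (p ◁ ypoly) :=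
  {| mpos := fun i => existT (fun i => dir p i -> unit) i (fun _ => tt);
     mdir := fun i e => projT1 e |}.

(** * Comonoids in (Poly, y, ◁)  (= small categories) *)
Record comonoid : Type := Comonoid {
  cp : poly; ceps : pmap cp ypoly; cdel : pmap cp (cp ◁ cp) }.

Definition IsComonoid (C : comonoid) : Prop :=
  runit (cp C) ∘ (pid (cp C) ⊲ ceps C) ∘ cdel C = pid (cp C) /\
  lunit (cp C) ∘ (ceps C ⊲ pid (cp C)) ∘ cdel C = pid (cp C) /\
  assoc (cp C) (cp C) (cp C) ∘ (cdel C ⊲ pid (cp C)) ∘ cdel C
    = (pid (cp C) ⊲ cdel C) ∘ cdel C.

Definition zero_comonoid : comonoid :=
  {| cp := zpoly;
     ceps := {| mpos := fun e : pos zpoly => match e with end;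
                mdir := fun e : pos zpoly => match e with end |};
     cdel := {| mpos := fun e : pos zpoly => match e with end;
                mdir := fun e : pos zpoly => match e with end |} |}.
Definition y_comonoid : comonoid :=
  {| cp := ypoly; ceps := pid ypoly; cdel := lunit_inv ypoly |}.

Definition IsCofunctor (C D : comonoid) (f : pmap (cp C) (cp D)) : Prop :=
  ceps D ∘ f = ceps C /\ cdel D ∘ f = (f ⊲ f) ∘ cdel C.

Definition IsBicomodule (C D : comonoid) (p : poly)
  (lam : pmap p (cp C ◁ p)) (rho : pmap p (p ◁ cp D)) : Prop :=
  lunit p ∘ (ceps C ⊲ pid p) ∘ lam = pid p /\
  assoc (cp C) (cp C) p ∘ (cdel C ⊲ pid p) ∘ lam = (pid (cp C) ⊲ lam) ∘ lam /\
  runit p ∘ (pid p ⊲ ceps D) ∘ rho = pid p /\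
  assoc p (cp D) (cp D) ∘ (rho ⊲ pid (cp D)) ∘ rho = (pid p ⊲ cdel D) ∘ rho /\
  assoc (cp C) p (cp D) ∘ (lam ⊲ pid (cp D)) ∘ rho = (pid (cp C) ⊲ rho) ∘ lam.

Definition IsBicomodSquare (C C' D D' : comonoid)
  (p : poly) (lam : pmap p (cp C ◁ p)) (rho : pmap p (p ◁ cp D))
  (p' : poly) (lam' : pmap p' (cp C' ◁ p')) (rho' : pmap p' (p' ◁ cp D'))
  (alpha : pmap (cp C) (cp C')) (beta : pmap (cp D) (cp D')) (g : pmap p p') : Prop :=
  (alpha ⊲ g) ∘ lam = lam' ∘ g /\ (g ⊲ beta) ∘ rho = rho' ∘ g.

(** The two parallel maps  p ◁ q  ⇉  (p ◁ d) ◁ q  whose equalizer is  p ◁_d q,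
    and the property of a morphism into p ◁ q to equalize them. *)
Definition Equalizes (D : comonoid) {x p q : poly}
  (rhoP : pmap p (p ◁ cp D)) (lamQ : pmap q (cp D ◁ q)) (h : pmap x (p ◁ q)) : Prop :=
  (rhoP ⊲ pid q) ∘ h = assoc_inv p (cp D) q ∘ (pid p ⊲ lamQ) ∘ h.

(** (r, lamR, rhoR) together with iota : r -> p ◁ q is a horizontal composite
    p ◁_D q in Cat#: iota is an equalizer in Poly of the two maps above, and
    the coactions of r are the ones induced on the equalizer. *)
Definition IsHComposite (C D E : comonoid)
  (p : poly) (lamP : pmap p (cp C ◁ p)) (rhoP : pmap p (p ◁ cp D))
  (q : poly) (lamQ : pmap q (cp D ◁ q)) (rhoQ : pmap q (q ◁ cp E))
  (r : poly) (lamR : pmap r (cp C ◁ r)) (rhoR : pmap r (r ◁ cp E))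
  (iota : pmap r (p ◁ q)) : Prop :=
  Equalizes D rhoP lamQ iota /\
  (forall (x : poly) (h : pmap x (p ◁ q)), Equalizes D rhoP lamQ h ->
     exists! h' : pmap x r, iota ∘ h' = h) /\
  (pid (cp C) ⊲ iota) ∘ lamR = assoc (cp C) p q ∘ (lamP ⊲ pid q) ∘ iota /\
  (iota ⊲ pid (cp E)) ∘ rhoR = assoc_inv p q (cp E) ∘ (pid p ⊲ rhoQ) ∘ iota.

Definition IsHandler (C D : comonoid) (s : poly) (phi : pmap (s ◁ cp D) (cp C ◁ s)) : Prop :=
  lunit s ∘ (ceps C ⊲ pid s) ∘ phi = runit s ∘ (pid s ⊲ ceps D) /\
  assoc (cp C) (cp C) s ∘ (cdel C ⊲ pid s) ∘ phi
    = (pid (cp C) ⊲ phi) ∘ assoc (cp C) s (cp D) ∘ (phi ⊲ pid (cp D))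
        ∘ assoc_inv s (cp D) (cp D) ∘ (pid s ⊲ cdel D).

Definition IsEffSquare (C C' D D' : comonoid)
  (s : poly) (phi : pmap (s ◁ cp D) (cp C ◁ s))
  (s' : poly) (phi' : pmap (s' ◁ cp D') (cp C' ◁ s'))
  (alpha : pmap (cp C) (cp C')) (beta : pmap (cp D) (cp D')) (gamma : pmap s s') : Prop :=
  (alpha ⊲ gamma) ∘ phi = phi' ∘ (gamma ⊲ beta).

Definition hcomp_phi (C D E : comonoid) (s : poly) (phi : pmap (s ◁ cp D) (cp C ◁ s))
  (t : poly) (psi : pmap (t ◁ cp E) (cp D ◁ t)) : pmap ((s ◁ t) ◁ cp E) (cp C ◁ (s ◁ t)) :=
  assoc (cp C) s t ∘ (phi ⊲ pid t) ∘ assoc_inv s (cp D) t ∘ (pid s ⊲ psi) ∘ assoc s t (cp E).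

Definition hid_phi (C : comonoid) : pmap (ypoly ◁ cp C) (cp C ◁ ypoly) :=
  runit_inv (cp C) ∘ lunit (cp C).

Definition F_rho (D : comonoid) (s : poly) : pmap (s ◁ cp D) ((s ◁ cp D) ◁ cp D) :=
  assoc_inv s (cp D) (cp D) ∘ (pid s ⊲ cdel D).
Definition F_lam (C D : comonoid) (s : poly) (phi : pmap (s ◁ cp D) (cp C ◁ s))
  : pmap (s ◁ cp D) (cp C ◁ (s ◁ cp D)) :=
  assoc (cp C) s (cp D) ∘ (phi ⊲ pid (cp D)) ∘ assoc_inv s (cp D) (cp D) ∘ (pid s ⊲ cdel D).
Definition F_sq {s s' : poly} (D D' : comonoid) (gamma : pmap s s') (beta : pmap (cp D) (cp D'))
  : pmap (s ◁ cp D) (s' ◁ cp D') := gamma ⊲ beta.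

(* Main.v *)
Require Import Defs.
From Stdlib Require Import FunctionalExtensionality Eqdep.

Transparent pcomp tri_map assoc assoc_inv lunit runit lunit_inv runit_inv pid.

Lemma pmap_ext_pt {p q} (h1 h2 : pmap p q) :
  (forall x, existT (fun j => dir q j -> dir p x) (mpos h1 x) (mdir h1 x) =
             existT (fun j => dir q j -> dir p x) (mpos h2 x) (mdir h2 x)) -> h1 = h2.
Proof.
  intros H. destruct h1 as [m1 d1], h2 as [m2 d2]; simpl in *.
  assert (E : (fun x => existT (fun j => dir q j -> dir p x) (m1 x) (d1 x))
            = (fun x => existT (fun j => dir q j -> dir p x) (m2 x) (d2 x)))
    by (apply functional_extensionality_dep; exact H).
  exact (f_equal (fun F => PMap (fun x => projT1 (F x)) (fun x => projT2 (F x))) E).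
Qed.

Lemma pt_eq {J : Type} {F : J -> Type} (j : J) (d1 d2 : F j) :
  d1 = d2 -> existT F j d1 = existT F j d2.
Proof. intros ->; reflexivity. Qed.


Lemma sig_elim1 {A : Type} {X : A -> Type} {C : forall a, X a -> Type}
  (P : (forall a, sigT (C a)) -> Type) :
  (forall (g1 : forall a, X a) (g2 : forall a, C a (g1 a)), P (fun a => existT _ (g1 a) (g2 a))) ->
  forall f, P f.
Proof.
  intros H f.
  replace f with (fun a => existT _ (projT1 (f a)) (projT2 (f a))). apply H.
  apply functional_extensionality_dep; intro a; destruct (f a); reflexivity.
Qed.

Lemma sig_elim2 {A : Type} {B : A -> Type} {X : forall a, B a -> Type}
  {C : forall a b, X a b -> Type}
  (P : (forall a b, sigT (C a b)) -> Type) :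
  (forall (g1 : forall a b, X a b) (g2 : forall a b, C a b (g1 a b)),
      P (fun a b => existT _ (g1 a b) (g2 a b))) ->
  forall f, P f.
Proof.
  intros H f.
  replace f with (fun a b => existT _ (projT1 (f a b)) (projT2 (f a b))). apply H.
  apply functional_extensionality_dep; intro a.
  apply functional_extensionality_dep; intro b; destruct (f a b); reflexivity.
Qed.

Lemma sig_elim3 {A : Type} {B : A -> Type} {D : forall a, B a -> Type}
  {X : forall a b, D a b -> Type}
  {C : forall a b d, X a b d -> Type}
  (P : (forall a b d, sigT (C a b d)) -> Type) :
  (forall (g1 : forall a b d, X a b d) (g2 : forall a b d, C a b d (g1 a b d)),
      P (fun a b d => existT _ (g1 a b d) (g2 a b d))) ->
  forall f, P f.
Proof.
  intros H f.
  replace f with (fun a b d => existT _ (projT1 (f a b d)) (projT2 (f a b d))). apply H.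
  apply functional_extensionality_dep; intro a.
  apply functional_extensionality_dep; intro b.
  apply functional_extensionality_dep; intro d; destruct (f a b d); reflexivity.
Qed.

Lemma sig_elim4 {A : Type} {B : A -> Type} {D : forall a, B a -> Type}
  {G : forall a b, D a b -> Type}
  {X : forall a b d, G a b d -> Type}
  {C : forall a b d g, X a b d g -> Type}
  (P : (forall a b d g, sigT (C a b d g)) -> Type) :
  (forall (g1 : forall a b d g, X a b d g) (g2 : forall a b d g, C a b d g (g1 a b d g)),
      P (fun a b d g => existT _ (g1 a b d g) (g2 a b d g))) ->
  forall f, P f.
Proof.
  intros H f.
  replace f with (fun a b d g => existT _ (projT1 (f a b d g)) (projT2 (f a b d g))). apply H.
  apply functional_extensionality_dep; intro a.
  apply functional_extensionality_dep; intro b.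
  apply functional_extensionality_dep; intro d.
  apply functional_extensionality_dep; intro g; destruct (f a b d g); reflexivity.
Qed.

Lemma unit_elim1 {A : Type} (P : (A -> unit) -> Type) : P (fun _ => tt) -> forall f, P f.
Proof.
  intros H f. replace f with (fun _ : A => tt). exact H.
  apply functional_extensionality; intro a; destruct (f a); reflexivity.
Qed.

Lemma unit_elim2 {A : Type} {B : A -> Type} (P : (forall a, B a -> unit) -> Type) :
  P (fun _ _ => tt) -> forall f, P f.
Proof.
  intros H f. replace f with (fun (a : A) (_ : B a) => tt). exact H.
  apply functional_extensionality_dep; intro a.
  apply functional_extensionality; intro b; destruct (f a b); reflexivity.
Qed.

Lemma unit_elim3 {A : Type} {B : A -> Type} {D : forall a, B a -> Type}
  (P : (forall a b, D a b -> unit) -> Type) :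
  P (fun _ _ _ => tt) -> forall f, P f.
Proof.
  intros H f. replace f with (fun (a : A) (b : B a) (_ : D a b) => tt). exact H.
  apply functional_extensionality_dep; intro a.
  apply functional_extensionality_dep; intro b.
  apply functional_extensionality; intro d; destruct (f a b d); reflexivity.
Qed.

Lemma unit_elim4 {A : Type} {B : A -> Type} {D : forall a, B a -> Type}
  {G : forall a b, D a b -> Type}
  (P : (forall a b d, G a b d -> unit) -> Type) :
  P (fun _ _ _ _ => tt) -> forall f, P f.
Proof.
  intros H f. replace f with (fun (a : A) (b : B a) (d : D a b) (_ : G a b d) => tt). exact H.
  apply functional_extensionality_dep; intro a.
  apply functional_extensionality_dep; intro b.
  apply functional_extensionality_dep; intro d.
  apply functional_extensionality; intro g; destruct (f a b d g); reflexivity.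
Qed.

Lemma udom_elim1 {X : Type} (P : (unit -> X) -> Type) :
  (forall x, P (fun _ => x)) -> forall f, P f.
Proof.
  intros H f. replace f with (fun _ : unit => f tt). apply H.
  apply functional_extensionality; intros []; reflexivity.
Qed.
Lemma udom_elim2 {A : Type} {X : A -> Type} (P : (forall a, unit -> X a) -> Type) :
  (forall g : forall a, X a, P (fun a _ => g a)) -> forall f, P f.
Proof.
  intros H f. replace f with (fun a (_ : unit) => f a tt). apply (H (fun a => f a tt)).
  apply functional_extensionality_dep; intro a; apply functional_extensionality; intros []; reflexivity.
Qed.

Ltac curry_tac f :=
  let g := fresh "g" in
  first
    [ pose (g := fun x y => f (existT _ x y));
      assert (f = fun z => g (projT1 z) (projT2 z))
        by (apply functional_extensionality_dep; intros [? ?]; reflexivity)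
    | pose (g := fun a x y => f a (existT _ x y));
      assert (f = fun a z => g a (projT1 z) (projT2 z))
        by (apply functional_extensionality_dep; intro; apply functional_extensionality_dep;
            intros [? ?]; reflexivity)
    | pose (g := fun a b x y => f a b (existT _ x y));
      assert (f = fun a b z => g a b (projT1 z) (projT2 z))
        by (do 2 (apply functional_extensionality_dep; intro); apply functional_extensionality_dep;
            intros [? ?]; reflexivity)
    | pose (g := fun a b c x y => f a b c (existT _ x y));
      assert (f = fun a b c z => g a b c (projT1 z) (projT2 z))
        by (do 3 (apply functional_extensionality_dep; intro); apply functional_extensionality_dep;
            intros [? ?]; reflexivity) ];
  clearbody g; subst f; cbn beta iota in g; canon_fun g
with canon_fun f :=
  (let T := type of f in let T' := eval cbn in T in change T' in f);
  first
    [ revert f; first [ refine (unit_elim1 _ _) | refine (unit_elim2 _ _) | refine (unit_elim3 _ _) | refine (unit_elim4 _ _) ]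
    | revert f;
      first [ refine (sig_elim1 _ _) | refine (sig_elim2 _ _) | refine (sig_elim3 _ _) | refine (sig_elim4 _ _) ];
      let g1 := fresh "g" in let g2 := fresh "g" in
      intros g1 g2; revert g2; canon_fun g1;
      let g2' := fresh "g" in intro g2'; canon_fun g2'
    | curry_tac f
    | revert f; refine (udom_elim1 _ _); let g := fresh "g" in intro g; canon_fun g
    | revert f; refine (udom_elim2 _ _); let g := fresh "g" in intro g; canon_fun g
    | idtac ].

Ltac canon_pos x :=
  let T := type of x in
  let T' := eval hnf in T in
  lazymatch T' with
  | @sigT _ _ => let a := fresh "a" in let b := fresh "b" in
                 destruct x as [a b]; cbn beta iota in b; revert b; canon_pos a;
                 let b' := fresh "b" in intro b'; canon_pos b'
  | unit => destruct x
  | forall _ : _, _ => canon_fun x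
  | _ => idtac
  end.

Ltac struct_tac :=
  apply pmap_ext_pt; let x := fresh "x" in intro x; canon_pos x;
  apply pt_eq; apply functional_extensionality; let e := fresh "e" in intro e; canon_pos e;
  reflexivity.


Lemma pt_eq' {J : Type} {A : Type} {B : J -> Type} (j1 j2 : J) (E : j1 = j2)
  (d1 : B j1 -> A) (d2 : B j2 -> A) :
  (forall e, eq_rect j1 (fun j => B j -> A) d1 j2 E e = d2 e) ->
  existT (fun j => B j -> A) j1 d1 = existT (fun j => B j -> A) j2 d2.
Proof.
  destruct E; simpl; intros H. f_equal. apply functional_extensionality; exact H.
Qed.

Ltac refl_nc := lazymatch goal with |- ?a = _ => exact_no_check (@eq_refl _ a) end.

Ltac canon_maps :=
  repeat match goal with f : pmap _ _ |- _ =>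
    let fm := fresh "fm" in let fd := fresh "fd" in
    destruct f as [fm fd]; revert fd; canon_fun fm; intro fd; canon_fun fd end.

Ltac struct_tac2 :=
  apply pmap_ext_pt; let x := fresh "x" in intro x; canon_pos x;
  simple refine (pt_eq' _ _ _ _ _ _); [lazymatch goal with |- ?a = _ => exact_no_check (@eq_refl _ a) end|];
  let e := fresh "e" in intro e; canon_pos e;
  lazymatch goal with |- ?a = _ => exact_no_check (@eq_refl _ a) end.

Ltac struct_tac3 := canon_maps; struct_tac2.

Transparent pcomp tri_map assoc assoc_inv lunit runit lunit_inv runit_inv pid.

Lemma compA {p q r t} (f : pmap r t) (g : pmap q r) (h : pmap p q) : f ∘ (g ∘ h) = f ∘ g ∘ h.
Proof. reflexivity. Qed.
Lemma id_l {p q} (f : pmap p q) : pid q ∘ f = f.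
Proof. destruct f; reflexivity. Qed.
Lemma id_r {p q} (f : pmap p q) : f ∘ pid p = f.
Proof. destruct f; reflexivity. Qed.
Lemma tri_comp {p p' p'' q q' q''} (f : pmap p' p'') (g : pmap q' q'') (f' : pmap p p') (g' : pmap q q') :
  (f ⊲ g) ∘ (f' ⊲ g') = (f ∘ f') ⊲ (g ∘ g').
Proof. reflexivity. Qed.
Lemma tri_id p q : pid p ⊲ pid q = pid (p ◁ q).
Proof. struct_tac2. Qed.
Lemma A_nat {p p' q q' r r'} (f : pmap p p') (g : pmap q q') (h : pmap r r') :
  assoc p' q' r' ∘ ((f ⊲ g) ⊲ h) = (f ⊲ (g ⊲ h)) ∘ assoc p q r.
Proof. reflexivity. Qed.
Lemma Ai_nat {p p' q q' r r'} (f : pmap p p') (g : pmap q q') (h : pmap r r') :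
  assoc_inv p' q' r' ∘ (f ⊲ (g ⊲ h)) = ((f ⊲ g) ⊲ h) ∘ assoc_inv p q r.
Proof. reflexivity. Qed.
Lemma lunit_nat {p q} (f : pmap p q) : lunit q ∘ (pid ypoly ⊲ f) = f ∘ lunit p.
Proof. reflexivity. Qed.
Lemma runit_nat {p q} (f : pmap p q) : runit q ∘ (f ⊲ pid ypoly) = f ∘ runit p.
Proof. reflexivity. Qed.
Lemma A_Ai p q r : assoc p q r ∘ assoc_inv p q r = pid _.
Proof. struct_tac2. Qed.
Lemma Ai_A p q r : assoc_inv p q r ∘ assoc p q r = pid _.
Proof. struct_tac2. Qed.
Lemma pentagon p q r s :
  assoc p q (r ◁ s) ∘ assoc (p ◁ q) r s
  = (pid p ⊲ assoc q r s) ∘ assoc p (q ◁ r) s ∘ (assoc p q r ⊲ pid s).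
Proof. struct_tac2. Qed.

Ltac prepend W L := lazymatch L with
  | pcomp ?A ?B => let A' := prepend W A in constr:(pcomp A' B)
  | _ => constr:(pcomp W L) end.

Ltac nrm := repeat rewrite compA.

Ltac inst H := lazymatch type of H with
  | forall _ : _, _ => let H2 := fresh "H" in epose proof (H _) as H2; clear H; rename H2 into H; inst H
  | _ => idtac end.

Ltac rwm_ctx H :=
  lazymatch type of H with @eq (pmap ?p ?q) ?L ?R =>
  lazymatch L with
  | pcomp (pcomp (pcomp (pcomp (pcomp (pcomp (pcomp (?b1) ?b2) ?b3) ?b4) ?b5) ?b6) ?b7) ?b8 =>
    match goal with |- context [pcomp (pcomp (pcomp (pcomp (pcomp (pcomp (pcomp (pcomp (?W) ?x1) ?x2) ?x3) ?x4) ?x5) ?x6) ?x7) ?x8] =>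
      unify x1 b1; unify x2 b2; unify x3 b3; unify x4 b4; unify x5 b5; unify x6 b6; unify x7 b7; unify x8 b8;
      let E := fresh "E" in
      assert (E : pcomp (pcomp (pcomp (pcomp (pcomp (pcomp (pcomp (pcomp (W) x1) x2) x3) x4) x5) x6) x7) x8 = pcomp W R) by (rewrite <- H; nrm; reflexivity);
      rewrite E; clear E end
  | pcomp (pcomp (pcomp (pcomp (pcomp (pcomp (?b1) ?b2) ?b3) ?b4) ?b5) ?b6) ?b7 =>
    match goal with |- context [pcomp (pcomp (pcomp (pcomp (pcomp (pcomp (pcomp (?W) ?x1) ?x2) ?x3) ?x4) ?x5) ?x6) ?x7] =>
      unify x1 b1; unify x2 b2; unify x3 b3; unify x4 b4; unify x5 b5; unify x6 b6; unify x7 b7;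
      let E := fresh "E" in
      assert (E : pcomp (pcomp (pcomp (pcomp (pcomp (pcomp (pcomp (W) x1) x2) x3) x4) x5) x6) x7 = pcomp W R) by (rewrite <- H; nrm; reflexivity);
      rewrite E; clear E end
  | pcomp (pcomp (pcomp (pcomp (pcomp (?b1) ?b2) ?b3) ?b4) ?b5) ?b6 =>
    match goal with |- context [pcomp (pcomp (pcomp (pcomp (pcomp (pcomp (?W) ?x1) ?x2) ?x3) ?x4) ?x5) ?x6] =>
      unify x1 b1; unify x2 b2; unify x3 b3; unify x4 b4; unify x5 b5; unify x6 b6;
      let E := fresh "E" in
      assert (E : pcomp (pcomp (pcomp (pcomp (pcomp (pcomp (W) x1) x2) x3) x4) x5) x6 = pcomp W R) by (rewrite <- H; nrm; reflexivity);
      rewrite E; clear E end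
  | pcomp (pcomp (pcomp (pcomp (?b1) ?b2) ?b3) ?b4) ?b5 =>
    match goal with |- context [pcomp (pcomp (pcomp (pcomp (pcomp (?W) ?x1) ?x2) ?x3) ?x4) ?x5] =>
      unify x1 b1; unify x2 b2; unify x3 b3; unify x4 b4; unify x5 b5;
      let E := fresh "E" in
      assert (E : pcomp (pcomp (pcomp (pcomp (pcomp (W) x1) x2) x3) x4) x5 = pcomp W R) by (rewrite <- H; nrm; reflexivity);
      rewrite E; clear E end
  | pcomp (pcomp (pcomp (?b1) ?b2) ?b3) ?b4 =>
    match goal with |- context [pcomp (pcomp (pcomp (pcomp (?W) ?x1) ?x2) ?x3) ?x4] =>
      unify x1 b1; unify x2 b2; unify x3 b3; unify x4 b4;
      let E := fresh "E" in
      assert (E : pcomp (pcomp (pcomp (pcomp (W) x1) x2) x3) x4 = pcomp W R) by (rewrite <- H; nrm; reflexivity);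
      rewrite E; clear E end
  | pcomp (pcomp (?b1) ?b2) ?b3 =>
    match goal with |- context [pcomp (pcomp (pcomp (?W) ?x1) ?x2) ?x3] =>
      unify x1 b1; unify x2 b2; unify x3 b3;
      let E := fresh "E" in
      assert (E : pcomp (pcomp (pcomp (W) x1) x2) x3 = pcomp W R) by (rewrite <- H; nrm; reflexivity);
      rewrite E; clear E end
  | pcomp (?b1) ?b2 =>
    match goal with |- context [pcomp (pcomp (?W) ?x1) ?x2] =>
      unify x1 b1; unify x2 b2;
      let E := fresh "E" in
      assert (E : pcomp (pcomp (W) x1) x2 = pcomp W R) by (rewrite <- H; nrm; reflexivity);
      rewrite E; clear E end
  end end.

Ltac rwm0 H := first [ rewrite H | rwm_ctx H ]; nrm.

Ltac rwm H := let H1 := fresh "H" in epose proof H as H1; inst H1; rwm0 H1; clear H1.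

Ltac rwmr H := let H1 := fresh "H" in epose proof H as H1; inst H1; rwm0 (eq_sym H1); clear H1.

Lemma tsl {p p' p'' r} (f : pmap p' p'') (g : pmap p p') : (f ∘ g) ⊲ pid r = (f ⊲ pid r) ∘ (g ⊲ pid r).
Proof. reflexivity. Qed.
Lemma tsr {p p' p'' r} (f : pmap p' p'') (g : pmap p p') : pid r ⊲ (f ∘ g) = (pid r ⊲ f) ∘ (pid r ⊲ g).
Proof. reflexivity. Qed.
Lemma xl {p p' q q'} (f : pmap p p') (g : pmap q q') : f ⊲ g = (f ⊲ pid q') ∘ (pid p ⊲ g).
Proof. rewrite tri_comp, id_l, id_r. reflexivity. Qed.
Lemma xr {p p' q q'} (f : pmap p p') (g : pmap q q') : f ⊲ g = (pid p' ⊲ g) ∘ (f ⊲ pid q).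
Proof. rewrite tri_comp, id_l, id_r. reflexivity. Qed.
Lemma A_nat_r {p q r r'} (h : pmap r r') :
  assoc p q r' ∘ (pid (p ◁ q) ⊲ h) = (pid p ⊲ (pid q ⊲ h)) ∘ assoc p q r.
Proof. rewrite <- A_nat, tri_id. reflexivity. Qed.
Lemma A_nat_l {p p' q r} (f : pmap p p') :
  assoc p' q r ∘ ((f ⊲ pid q) ⊲ pid r) = (f ⊲ pid (q ◁ r)) ∘ assoc p q r.
Proof. rewrite A_nat, tri_id. reflexivity. Qed.
Lemma A_nat_m {p q q' r} (g : pmap q q') :
  assoc p q' r ∘ ((pid p ⊲ g) ⊲ pid r) = (pid p ⊲ (g ⊲ pid r)) ∘ assoc p q r.
Proof. apply A_nat. Qed.
Lemma Ai_nat_r {p q r r'} (h : pmap r r') :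
  assoc_inv p q r' ∘ (pid p ⊲ (pid q ⊲ h)) = (pid (p ◁ q) ⊲ h) ∘ assoc_inv p q r.
Proof. rewrite Ai_nat, tri_id. reflexivity. Qed.
Lemma Ai_nat_l {p p' q r} (f : pmap p p') :
  assoc_inv p' q r ∘ (f ⊲ pid (q ◁ r)) = ((f ⊲ pid q) ⊲ pid r) ∘ assoc_inv p q r.
Proof. rewrite <- Ai_nat, tri_id. reflexivity. Qed.
Lemma Ai_nat_m {p q q' r} (g : pmap q q') :
  assoc_inv p q' r ∘ (pid p ⊲ (g ⊲ pid r)) = ((pid p ⊲ g) ⊲ pid r) ∘ assoc_inv p q r.
Proof. apply Ai_nat. Qed.
Lemma pent2 p q r s :
  assoc p (q ◁ r) s ∘ (assoc p q r ⊲ pid s)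
  = (pid p ⊲ assoc_inv q r s) ∘ assoc p q (r ◁ s) ∘ assoc (p ◁ q) r s.
Proof. rewrite <- compA, pentagon. nrm. rewrite tri_comp, id_l, Ai_A, tri_id, id_l. reflexivity. Qed.
Lemma ic {p p' q q'} (f : pmap p p') (g : pmap q q') : (pid p' ⊲ g) ∘ (f ⊲ pid q) = (f ⊲ pid q') ∘ (pid p ⊲ g).
Proof. rewrite !tri_comp, !id_l, !id_r. reflexivity. Qed.
Lemma cm1 {p p' q q' r} (f : pmap q q') (g : pmap p p') (h : pmap r q) : (pid p' ⊲ f) ∘ (g ⊲ h) = g ⊲ (f ∘ h).
Proof. rewrite tri_comp, id_l. reflexivity. Qed.
Lemma cm2 {p p' q q' r} (f : pmap q q') (g : pmap p p') (h : pmap r q) : g ⊲ (f ∘ h) = (g ⊲ f) ∘ (pid p ⊲ h).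
Proof. rewrite tri_comp, id_r. reflexivity. Qed.
Lemma cm3 {p p' p'' q q'} (f : pmap p' p'') (g : pmap p p') (h : pmap q q') : (f ⊲ pid q') ∘ (g ⊲ h) = (f ∘ g) ⊲ h.
Proof. rewrite tri_comp, id_l. reflexivity. Qed.
Lemma cm4 {p p' p'' q q'} (f : pmap p' p'') (g : pmap p p') (h : pmap q q') : (f ∘ g) ⊲ h = (f ⊲ h) ∘ (g ⊲ pid q).
Proof. rewrite tri_comp, id_r. reflexivity. Qed.
Lemma tri_id_r_pid {p q} : pid (p ◁ q) = pid p ⊲ pid q.
Proof. symmetry; apply tri_id. Qed.
Opaque pcomp tri_map assoc assoc_inv lunit runit lunit_inv runit_inv pid.
Lemma Pinv1 p q r s :
  pid p ⊲ assoc q r s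
  = assoc p q (r ◁ s) ∘ assoc (p ◁ q) r s ∘ (assoc_inv p q r ⊲ pid s) ∘ assoc_inv p (q ◁ r) s.
Proof.
  rewrite pentagon. nrm. rwm (@tri_comp). rewrite A_Ai, id_l, tri_id, id_r. rwm A_Ai. rewrite id_r. reflexivity.
Qed.
Lemma Pinv2 p q r s :
  assoc p q r ⊲ pid s
  = assoc_inv p (q ◁ r) s ∘ (pid p ⊲ assoc_inv q r s) ∘ assoc p q (r ◁ s) ∘ assoc (p ◁ q) r s.
Proof.
  rwm pentagon. rwm (@tri_comp). rewrite id_l, Ai_A, tri_id, id_r. rewrite Ai_A, id_l. reflexivity.
Qed.
Lemma pent3 p q r s :
  (assoc_inv p q r ⊲ pid s) ∘ assoc_inv p (q ◁ r) s
  = assoc_inv (p ◁ q) r s ∘ assoc_inv p q (r ◁ s) ∘ (pid p ⊲ assoc q r s).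
Proof.
  rewrite Pinv1. nrm. rwm Ai_A. rewrite id_r. rwm Ai_A. rewrite id_l. reflexivity.
Qed.
Lemma pent4 p q r s :
  (assoc p q r ⊲ pid s) ∘ assoc_inv (p ◁ q) r s
  = assoc_inv p (q ◁ r) s ∘ (pid p ⊲ assoc_inv q r s) ∘ assoc p q (r ◁ s).
Proof.
  rewrite Pinv2. nrm. rwm A_Ai. rewrite id_r. reflexivity.
Qed.

Transparent pcomp tri_map assoc assoc_inv lunit runit lunit_inv runit_inv pid.

Lemma SB4a (s D : poly) (dD : pmap D (D ◁ D)) :
  assoc (s ◁ D) D D ∘ (assoc_inv s D D ⊲ pid D) ∘ ((pid s ⊲ dD) ⊲ pid D) ∘ assoc_inv s D D ∘ (pid s ⊲ dD)
  = assoc_inv s D (D ◁ D) ∘ (pid s ⊲ (assoc D D D ∘ (dD ⊲ pid D) ∘ dD)).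
Proof. struct_tac2. Qed.

Lemma SB1a (s C D : poly) (phi : pmap (s ◁ D) (C ◁ s)) (eC : pmap C ypoly) :
  lunit (s ◁ D) ∘ (eC ⊲ pid (s ◁ D)) ∘ assoc C s D ∘ (phi ⊲ pid D)
  = (lunit s ∘ (eC ⊲ pid s) ∘ phi) ⊲ pid D.
Proof. struct_tac2. Qed.
Lemma SB1b (s D : poly) (eD : pmap D ypoly) (dD : pmap D (D ◁ D)) :
 ((runit s ∘ (pid s ⊲ eD)) ⊲ pid D) ∘ assoc_inv s D D ∘ (pid s ⊲ dD) = pid s ⊲ (lunit D ∘ (eD ⊲ pid D) ∘ dD).
Proof. struct_tac2. Qed.
Lemma SB3 (s D : poly) (eD : pmap D ypoly) (dD : pmap D (D ◁ D)) :
  runit (s ◁ D) ∘ (pid (s ◁ D) ⊲ eD) ∘ assoc_inv s D D ∘ (pid s ⊲ dD)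
  = pid s ⊲ (runit D ∘ (pid D ⊲ eD) ∘ dD).
Proof. struct_tac2. Qed.

Opaque pcomp tri_map assoc assoc_inv lunit runit lunit_inv runit_inv pid.

Lemma rho_coassoc (s D : poly) (dD : pmap D (D ◁ D))
  (CL3 : assoc D D D ∘ (dD ⊲ pid D) ∘ dD = (pid D ⊲ dD) ∘ dD) :
  assoc (s ◁ D) D D ∘ ((assoc_inv s D D ∘ (pid s ⊲ dD)) ⊲ pid D) ∘ (assoc_inv s D D ∘ (pid s ⊲ dD))
  = (pid (s ◁ D) ⊲ dD) ∘ (assoc_inv s D D ∘ (pid s ⊲ dD)).
Proof.
  nrm. rewrite tsl. nrm. rewrite SB4a, CL3. rwmr (@Ai_nat_r s D D (D ◁ D) dD). rwmr (@tsr D (D ◁ D) (D ◁ (D ◁ D)) s).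
  reflexivity.
Qed.

Lemma B5 (s C D : poly) (phi : pmap (s ◁ D) (C ◁ s)) (dD : pmap D (D ◁ D))
  (CL3 : assoc D D D ∘ (dD ⊲ pid D) ∘ dD = (pid D ⊲ dD) ∘ dD) :
  assoc C (s ◁ D) D ∘ ((assoc C s D ∘ (phi ⊲ pid D) ∘ assoc_inv s D D ∘ (pid s ⊲ dD)) ⊲ pid D)
   ∘ (assoc_inv s D D ∘ (pid s ⊲ dD))
  = (pid C ⊲ (assoc_inv s D D ∘ (pid s ⊲ dD))) ∘ (assoc C s D ∘ (phi ⊲ pid D) ∘ assoc_inv s D D ∘ (pid s ⊲ dD)).
Proof.
  nrm. rewrite !tsl. nrm. rwm pent2. rwm (@A_nat_l (s ◁ D) (C ◁ s) D D). rwm SB4a. rewrite CL3.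
  rewrite (tsr (assoc_inv s D D) (pid s ⊲ dD)). nrm. rwmr (@A_nat_r C s D (D ◁ D) dD). rwm (@ic). rwmr (@Ai_nat_r s D D (D ◁ D) dD).
  rwmr (@tsr D (D ◁ D) (D ◁ (D ◁ D)) s). reflexivity.
Qed.

Lemma B2 (s C D : poly) (phi : pmap (s ◁ D) (C ◁ s)) (dD : pmap D (D ◁ D)) (dC : pmap C (C ◁ C))
  (CL3 : assoc D D D ∘ (dD ⊲ pid D) ∘ dD = (pid D ⊲ dD) ∘ dD)
  (H2 : assoc C C s ∘ (dC ⊲ pid s) ∘ phi
    = (pid C ⊲ phi) ∘ assoc C s D ∘ (phi ⊲ pid D) ∘ assoc_inv s D D ∘ (pid s ⊲ dD)) :
  assoc C C (s ◁ D) ∘ (dC ⊲ pid (s ◁ D)) ∘ (assoc C s D ∘ (phi ⊲ pid D) ∘ assoc_inv s D D ∘ (pid s ⊲ dD))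
  = (pid C ⊲ (assoc C s D ∘ (phi ⊲ pid D) ∘ assoc_inv s D D ∘ (pid s ⊲ dD)))
    ∘ (assoc C s D ∘ (phi ⊲ pid D) ∘ assoc_inv s D D ∘ (pid s ⊲ dD)).
Proof.
  nrm. rwmr (@A_nat_l C (C ◁ C) s D dC). rwm pentagon.
  rwmr (@tsl (C ◁ s) ((C ◁ C) ◁ s) (C ◁ (C ◁ s)) D). rwmr (@tsl (s ◁ D) (C ◁ s) (C ◁ (C ◁ s)) D).
  rewrite H2. rewrite !tsl. nrm.
  rwm (@A_nat_m C (s ◁ D) (C ◁ s) D). 
  rwm pent2. rwm (@A_nat_l (s ◁ D) (C ◁ s) D D). rwm SB4a. rewrite CL3.
  rewrite !tsr. nrm. rwmr (@A_nat_r C s D (D ◁ D) dD). rwm (@ic). rwmr (@Ai_nat_r s D D (D ◁ D) dD).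
  rwmr (@tsr D (D ◁ D) (D ◁ (D ◁ D)) s). reflexivity.
Qed.

Transparent pcomp tri_map assoc assoc_inv lunit runit lunit_inv runit_inv pid.
Opaque pcomp tri_map assoc assoc_inv lunit runit lunit_inv runit_inv pid.

Lemma F_bicomod (C D : comonoid) (s : poly) (phi : pmap (s ◁ cp D) (cp C ◁ s)) :
  IsComonoid C -> IsComonoid D -> IsHandler C D s phi ->
  IsBicomodule C D (s ◁ cp D) (F_lam C D s phi) (F_rho D s).
Proof.
  intros [C1 [C2 C3]] [D1 [D2 D3]] [H1 H2]. unfold IsBicomodule, F_lam, F_rho.
  split; [|split; [|split; [|split]]].
  - nrm. rewrite SB1a, H1, SB1b, D2, tri_id. reflexivity.
  - apply B2; assumption.
  - nrm. rewrite SB3, D1, tri_id. reflexivity.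
  - apply rho_coassoc; assumption.
  - apply B5; assumption.
Qed.

Lemma F_square (C C' D D' : comonoid)
       (s : poly) (phi : pmap (s ◁ cp D) (cp C ◁ s))
       (s' : poly) (phi' : pmap (s' ◁ cp D') (cp C' ◁ s'))
       (alpha : pmap (cp C) (cp C')) (beta : pmap (cp D) (cp D')) (gamma : pmap s s') :
  IsCofunctor D D' beta ->
  IsEffSquare C C' D D' s phi s' phi' alpha beta gamma ->
  IsBicomodSquare C C' D D'
         (s ◁ cp D) (F_lam C D s phi) (F_rho D s)
         (s' ◁ cp D') (F_lam C' D' s' phi') (F_rho D' s')
         alpha beta (F_sq D D' gamma beta).
Proof.
  intros [e1 e2] Hs. unfold IsBicomodSquare, IsEffSquare, F_lam, F_rho, F_sq in *. split.
  - nrm. rwm (cm1 (cdel D') gamma beta). rewrite e2. rwm (cm2 (beta ⊲ beta) gamma (cdel D)).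
    rwm (@Ai_nat s s' (cp D) (cp D') (cp D) (cp D') gamma beta beta).
    rwm (cm3 phi' (gamma ⊲ beta) beta). rewrite <- Hs. rewrite (cm4 (alpha ⊲ gamma) phi beta). nrm.
    rwm (@A_nat (cp C) (cp C') s s' (cp D) (cp D') alpha gamma beta). reflexivity.
  - nrm. rwm (cm1 (cdel D') gamma beta). rewrite e2. rwm (cm2 (beta ⊲ beta) gamma (cdel D)).
    rwm (@Ai_nat s s' (cp D) (cp D') (cp D) (cp D') gamma beta beta). reflexivity.
Qed.

Transparent pcomp tri_map assoc assoc_inv lunit runit lunit_inv runit_inv pid.
Lemma SD2b (D q : poly) (lam : pmap q (D ◁ q)) (eD : pmap D ypoly) :
  ((lunit D ∘ (eD ⊲ pid D)) ⊲ pid q) ∘ assoc_inv D D q ∘ (pid D ⊲ lam) = lam ∘ lunit q ∘ (eD ⊲ pid q).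
Proof. struct_tac3. Qed.

Transparent pcomp tri_map assoc assoc_inv lunit runit lunit_inv runit_inv pid.
Opaque pcomp tri_map assoc assoc_inv lunit runit lunit_inv runit_inv pid.

Lemma D_equalizes (s t D E : poly) (lam : pmap (t ◁ E) (D ◁ (t ◁ E))) (dD : pmap D (D ◁ D))
  (L2 : assoc D D (t ◁ E) ∘ (dD ⊲ pid (t ◁ E)) ∘ lam = (pid D ⊲ lam) ∘ lam) :
  ((assoc_inv s D D ∘ (pid s ⊲ dD)) ⊲ pid (t ◁ E)) ∘ (assoc_inv s D (t ◁ E) ∘ (pid s ⊲ lam) ∘ assoc s t E)
  = assoc_inv (s ◁ D) D (t ◁ E) ∘ (pid (s ◁ D) ⊲ lam) ∘ (assoc_inv s D (t ◁ E) ∘ (pid s ⊲ lam) ∘ assoc s t E).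
Proof.
  nrm. rewrite (tsl (assoc_inv s D D) (pid s ⊲ dD)). nrm.
  rwmr (@Ai_nat_m s D (D ◁ D) (t ◁ E) dD). rwm pent3.
  rwmr (@tsr _ _ _ s (assoc D D (t ◁ E)) (dD ⊲ pid (t ◁ E))).
  rwmr (@tsr _ _ _ s (assoc D D (t ◁ E) ∘ (dD ⊲ pid (t ◁ E))) lam).
  rewrite L2. rewrite (@tsr _ _ _ s (pid D ⊲ lam) lam). nrm.
  rwmr (@Ai_nat_r s D (t ◁ E) (D ◁ (t ◁ E)) lam). reflexivity.
Qed.

Lemma D_claim_a (s D q : poly) (eD : pmap D ypoly) (dD : pmap D (D ◁ D))
  (CL2 : lunit D ∘ (eD ⊲ pid D) ∘ dD = pid D) :
  (((pid s ⊲ (lunit D ∘ (eD ⊲ pid D))) ∘ assoc s D D) ⊲ pid q) ∘ ((assoc_inv s D D ∘ (pid s ⊲ dD)) ⊲ pid q)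
  = pid _.
Proof.
  rewrite <- tsl. nrm. rwm A_Ai. rewrite id_r. rewrite <- tsr, CL2, !tri_id. reflexivity.
Qed.

Lemma D_claim_b (s D q : poly) (lam : pmap q (D ◁ q)) (eD : pmap D ypoly) :
  (((pid s ⊲ (lunit D ∘ (eD ⊲ pid D))) ∘ assoc s D D) ⊲ pid q) ∘ assoc_inv (s ◁ D) D q ∘ (pid (s ◁ D) ⊲ lam)
  = assoc_inv s D q ∘ (pid s ⊲ lam) ∘ (pid s ⊲ (lunit q ∘ (eD ⊲ pid q))) ∘ assoc s D q.
Proof.
  rewrite tsl. nrm. rwm pent4. rwmr (@Ai_nat_m s (D ◁ D) D q (lunit D ∘ (eD ⊲ pid D))).
  rwm (@A_nat_r s D q (D ◁ q) lam).
  rwmr (@tsr _ _ _ s ((lunit D ∘ (eD ⊲ pid D)) ⊲ pid q) (assoc_inv D D q)).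
  rwmr (@tsr _ _ _ s (((lunit D ∘ (eD ⊲ pid D)) ⊲ pid q) ∘ assoc_inv D D q) (pid D ⊲ lam)).
  rewrite SD2b. rewrite !tsr. nrm. reflexivity.
Qed.

Lemma D_universal (s t D E : poly) (lam : pmap (t ◁ E) (D ◁ (t ◁ E))) (eD : pmap D ypoly)
  (dD : pmap D (D ◁ D))
  (CL2 : lunit D ∘ (eD ⊲ pid D) ∘ dD = pid D)
  (L1 : lunit (t ◁ E) ∘ (eD ⊲ pid (t ◁ E)) ∘ lam = pid _)
  (x : poly) (h : pmap x ((s ◁ D) ◁ (t ◁ E)))
  (Heq : ((assoc_inv s D D ∘ (pid s ⊲ dD)) ⊲ pid (t ◁ E)) ∘ h
         = assoc_inv (s ◁ D) D (t ◁ E) ∘ (pid (s ◁ D) ⊲ lam) ∘ h) :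
  exists! h' : pmap x ((s ◁ t) ◁ E), (assoc_inv s D (t ◁ E) ∘ (pid s ⊲ lam) ∘ assoc s t E) ∘ h' = h.
Proof.
  set (r := assoc_inv s t E ∘ (pid s ⊲ (lunit (t ◁ E) ∘ (eD ⊲ pid (t ◁ E)))) ∘ assoc s D (t ◁ E)).
  assert (Hri : r ∘ (assoc_inv s D (t ◁ E) ∘ (pid s ⊲ lam) ∘ assoc s t E) = pid _).
  { unfold r. nrm. rwm A_Ai. rewrite id_r. rwmr (@tsr _ _ _ s (lunit (t ◁ E) ∘ (eD ⊲ pid (t ◁ E))) lam).
    rewrite L1, tri_id, id_r, Ai_A. reflexivity. }
  exists (r ∘ h). split.
  - transitivity ((((pid s ⊲ (lunit D ∘ (eD ⊲ pid D))) ∘ assoc s D D) ⊲ pid (t ◁ E))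
       ∘ ((assoc_inv s D D ∘ (pid s ⊲ dD)) ⊲ pid (t ◁ E)) ∘ h).
    + rewrite <- (compA _ _ h), Heq. nrm. rewrite D_claim_b. unfold r. nrm. rwm A_Ai. rewrite id_r. reflexivity.
    + rewrite D_claim_a by exact CL2. apply id_l.
  - intros h' Hh'. rewrite <- Hh'. rewrite compA, Hri. apply id_l.
Qed.

Lemma D_right (s t D E : poly) (lam : pmap (t ◁ E) (D ◁ (t ◁ E))) (dE : pmap E (E ◁ E))
  (L5 : assoc D (t ◁ E) E ∘ (lam ⊲ pid E) ∘ assoc_inv t E E ∘ (pid t ⊲ dE)
        = (pid D ⊲ (assoc_inv t E E ∘ (pid t ⊲ dE))) ∘ lam) :
  ((assoc_inv s D (t ◁ E) ∘ (pid s ⊲ lam) ∘ assoc s t E) ⊲ pid E)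
     ∘ (assoc_inv (s ◁ t) E E ∘ (pid (s ◁ t) ⊲ dE))
  = assoc_inv (s ◁ D) (t ◁ E) E ∘ (pid (s ◁ D) ⊲ (assoc_inv t E E ∘ (pid t ⊲ dE)))
     ∘ (assoc_inv s D (t ◁ E) ∘ (pid s ⊲ lam) ∘ assoc s t E).
Proof.
  nrm. rewrite !tsl. nrm. rwm pent4. rwm (@A_nat_r s t E (E ◁ E) dE).
  rwmr (@Ai_nat_m s (t ◁ E) (D ◁ (t ◁ E)) E lam). rwm pent3.
  rwmr (@tsr _ _ _ s (assoc D (t ◁ E) E) (lam ⊲ pid E)).
  rwmr (@tsr _ _ _ s (assoc D (t ◁ E) E ∘ (lam ⊲ pid E)) (assoc_inv t E E)).
  rwmr (@tsr _ _ _ s (assoc D (t ◁ E) E ∘ (lam ⊲ pid E) ∘ assoc_inv t E E) (pid t ⊲ dE)).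
  rewrite L5. rewrite (@tsr _ _ _ s (pid D ⊲ (assoc_inv t E E ∘ (pid t ⊲ dE))) lam). nrm.
  rwm (@Ai_nat_r s D (t ◁ E) ((t ◁ E) ◁ E) (assoc_inv t E E ∘ (pid t ⊲ dE))). reflexivity.
Qed.

Lemma LR (s t C D E : poly) (phi : pmap (s ◁ D) (C ◁ s)) (psi : pmap (t ◁ E) (D ◁ t))
  (dE : pmap E (E ◁ E)) :
  assoc C (s ◁ t) E
    ∘ ((assoc C s t ∘ (phi ⊲ pid t) ∘ assoc_inv s D t ∘ (pid s ⊲ psi) ∘ assoc s t E) ⊲ pid E)
    ∘ assoc_inv (s ◁ t) E E ∘ (pid (s ◁ t) ⊲ dE)
  = (pid C ⊲ assoc_inv s t E) ∘ assoc C s (t ◁ E) ∘ (phi ⊲ pid (t ◁ E)) ∘ assoc_inv s D (t ◁ E)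
    ∘ (pid s ⊲ (assoc D t E ∘ (psi ⊲ pid E) ∘ assoc_inv t E E ∘ (pid t ⊲ dE))) ∘ assoc s t E.
Proof.
  transitivity ((pid C ⊲ assoc_inv s t E) ∘ assoc C s (t ◁ E) ∘ (phi ⊲ pid (t ◁ E)) ∘ assoc_inv s D (t ◁ E)
    ∘ (pid s ⊲ assoc D t E) ∘ (pid s ⊲ (psi ⊲ pid E)) ∘ (pid s ⊲ assoc_inv t E E)
    ∘ assoc s t (E ◁ E) ∘ (pid (s ◁ t) ⊲ dE)).
  - rewrite !tsl. nrm. rwm pent4. rwmr (@Ai_nat_m s (t ◁ E) (D ◁ t) E psi). rwm pent3.
    rwmr (@Ai_nat_l (s ◁ D) (C ◁ s) t E phi). rwm pent2. rwm A_Ai. rewrite id_r. reflexivity.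
  - rewrite !tsr. nrm. rwmr (@A_nat_r s t E (E ◁ E) dE). reflexivity.
Qed.

Lemma D_left (s t C D E : poly) (phi : pmap (s ◁ D) (C ◁ s)) (psi : pmap (t ◁ E) (D ◁ t))
  (dD : pmap D (D ◁ D)) (dE : pmap E (E ◁ E)) (lq : pmap (t ◁ E) (D ◁ (t ◁ E)))
  (Hlq : lq = assoc D t E ∘ (psi ⊲ pid E) ∘ assoc_inv t E E ∘ (pid t ⊲ dE))
  (B2t : assoc D D (t ◁ E) ∘ (dD ⊲ pid (t ◁ E)) ∘ lq = (pid D ⊲ lq) ∘ lq) :
  (pid C ⊲ (assoc_inv s D (t ◁ E) ∘ (pid s ⊲ lq) ∘ assoc s t E))
    ∘ (assoc C (s ◁ t) E
       ∘ ((assoc C s t ∘ (phi ⊲ pid t) ∘ assoc_inv s D t ∘ (pid s ⊲ psi) ∘ assoc s t E) ⊲ pid E)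
       ∘ assoc_inv (s ◁ t) E E ∘ (pid (s ◁ t) ⊲ dE))
  = assoc C (s ◁ D) (t ◁ E) ∘ ((assoc C s D ∘ (phi ⊲ pid D) ∘ assoc_inv s D D ∘ (pid s ⊲ dD)) ⊲ pid (t ◁ E))
    ∘ (assoc_inv s D (t ◁ E) ∘ (pid s ⊲ lq) ∘ assoc s t E).
Proof.
  transitivity ((pid C ⊲ assoc_inv s D (t ◁ E)) ∘ (pid C ⊲ (pid s ⊲ lq)) ∘ assoc C s (t ◁ E)
    ∘ (phi ⊲ pid (t ◁ E)) ∘ assoc_inv s D (t ◁ E) ∘ (pid s ⊲ lq) ∘ assoc s t E).
  - nrm. rwm LR. rewrite <- Hlq.
    rwmr (@tsr _ _ _ C (assoc_inv s D (t ◁ E) ∘ (pid s ⊲ lq) ∘ assoc s t E) (assoc_inv s t E)).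
    nrm. rwm A_Ai. rewrite id_r, tsr. reflexivity.
  - symmetry. nrm. rewrite !tsl. nrm.
    rwmr (@Ai_nat_m s D (D ◁ D) (t ◁ E) dD). rwm pent3.
    rwmr (@tsr _ _ _ s (assoc D D (t ◁ E)) (dD ⊲ pid (t ◁ E))).
    rwmr (@tsr _ _ _ s (assoc D D (t ◁ E) ∘ (dD ⊲ pid (t ◁ E))) lq).
    rewrite B2t. rewrite (@tsr _ _ _ s (pid D ⊲ lq) lq). nrm.
    rwm (@Ai_nat_r s D (t ◁ E) (D ◁ (t ◁ E)) lq).
    rwmr (@Ai_nat_l (s ◁ D) (C ◁ s) D (t ◁ E) phi). rwmr (@ic).
    rwm pent2. rwm A_Ai. rewrite id_r.
    rwm (@A_nat_r C s (t ◁ E) (D ◁ (t ◁ E)) lq). reflexivity.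
Qed.

Transparent pcomp tri_map assoc assoc_inv lunit runit lunit_inv runit_inv pid.
Opaque pcomp tri_map assoc assoc_inv lunit runit lunit_inv runit_inv pid.

Definition iotaF (C D E : comonoid) (s : poly) (phi : pmap (s ◁ cp D) (cp C ◁ s))
  (t : poly) (psi : pmap (t ◁ cp E) (cp D ◁ t)) : pmap ((s ◁ t) ◁ cp E) ((s ◁ cp D) ◁ (t ◁ cp E)) :=
  assoc_inv s (cp D) (t ◁ cp E) ∘ (pid s ⊲ F_lam D E t psi) ∘ assoc s t (cp E).

Lemma F_hcomp (C D E : comonoid)
       (s : poly) (phi : pmap (s ◁ cp D) (cp C ◁ s))
       (t : poly) (psi : pmap (t ◁ cp E) (cp D ◁ t)) :
       IsComonoid C -> IsComonoid D -> IsComonoid E ->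
       IsHandler C D s phi -> IsHandler D E t psi ->
       IsHComposite C D E
         (s ◁ cp D) (F_lam C D s phi) (F_rho D s)
         (t ◁ cp E) (F_lam D E t psi) (F_rho E t)
         ((s ◁ t) ◁ cp E) (F_lam C E (s ◁ t) (hcomp_phi C D E s phi t psi)) (F_rho E (s ◁ t))
         (iotaF C D E s phi t psi).
Proof.
  intros HC HD HE Hphi Hpsi.
  destruct (F_bicomod D E t psi HD HE Hpsi) as [L1 [L2 [L3 [L4 L5]]]].
  pose proof HD as [D1 [D2 D3]].
  unfold IsHComposite. split; [|split; [|split]].
  - unfold Equalizes, iotaF. unfold F_rho at 1. apply D_equalizes. exact L2.
  - intros x h Heq. unfold Equalizes, F_rho in Heq. unfold iotaF.
    exact (D_universal s t (cp D) (cp E) (F_lam D E t psi) (ceps D) (cdel D) D2 L1 x h Heq).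
  - unfold iotaF. set (lq := F_lam D E t psi). unfold F_lam, hcomp_phi.
    apply (D_left s t (cp C) (cp D) (cp E) phi psi (cdel D) (cdel E) lq).
    + reflexivity.
    + exact L2.
  - unfold iotaF. set (lq := F_lam D E t psi). unfold F_rho.
    apply D_right. unfold F_rho in L5. nrm. exact L5.
Qed.

Transparent pcomp tri_map assoc assoc_inv lunit runit lunit_inv runit_inv pid.
Lemma UI1 (C X : poly) : (lunit C ⊲ pid X) ∘ assoc_inv ypoly C X = lunit (C ◁ X).
Proof. struct_tac2. Qed.
Lemma UI2 (s D : poly) : lunit (s ◁ D) ∘ assoc ypoly s D = lunit s ⊲ pid D.
Proof. struct_tac2. Qed.
Lemma UJ1 (p q : poly) : runit (p ◁ q) ∘ assoc_inv p q ypoly = pid p ⊲ runit q.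
Proof. struct_tac2. Qed.
Lemma UJ3 (s D : poly) : (pid s ⊲ lunit D) ∘ assoc s ypoly D = runit s ⊲ pid D.
Proof. struct_tac2. Qed.
Lemma LL1 (C : poly) : lunit_inv C ∘ lunit C = pid (ypoly ◁ C).
Proof. struct_tac2. Qed.
Lemma LL2 (C : poly) : lunit C ∘ lunit_inv C = pid C.
Proof. struct_tac2. Qed.
Lemma LNat {C C'} (alpha : pmap C C') : lunit_inv C' ∘ alpha = (pid ypoly ⊲ alpha) ∘ lunit_inv C.
Proof. struct_tac3. Qed.
Lemma U1 (C : poly) (dC : pmap C (C ◁ C)) :
  (pid C ⊲ lunit_inv C) ∘ dC
  = (assoc C ypoly C ∘ ((runit_inv C ∘ lunit C) ⊲ pid C) ∘ assoc_inv ypoly C C ∘ (pid ypoly ⊲ dC)) ∘ lunit_inv C.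
Proof. struct_tac3. Qed.
Lemma U2 (C : poly) (dC : pmap C (C ◁ C)) :
  (lunit_inv C ⊲ pid C) ∘ dC = (assoc_inv ypoly C C ∘ (pid ypoly ⊲ dC)) ∘ lunit_inv C.
Proof. struct_tac3. Qed.
Lemma UJ2 (D : poly) (eD : pmap D ypoly) (dD : pmap D (D ◁ D)) :
  runit D ∘ (pid D ⊲ eD) ∘ (pid D ⊲ lunit D)
    ∘ assoc D ypoly D ∘ ((runit_inv D ∘ lunit D) ⊲ pid D) ∘ assoc_inv ypoly D D ∘ (pid ypoly ⊲ dD)
  = lunit D ∘ (pid ypoly ⊲ (runit D ∘ (pid D ⊲ eD) ∘ dD)).
Proof. struct_tac3. Qed.

Transparent pcomp tri_map assoc assoc_inv lunit runit lunit_inv runit_inv pid.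
Opaque pcomp tri_map assoc assoc_inv lunit runit lunit_inv runit_inv pid.

Lemma F_unitor (C : comonoid) :
  lunit_inv (cp C) ∘ lunit (cp C) = pid (ypoly ◁ cp C) /\
  lunit (cp C) ∘ lunit_inv (cp C) = pid (cp C) /\
  IsBicomodSquare C C C C
    (cp C) (cdel C) (cdel C)
    (ypoly ◁ cp C) (F_lam C C ypoly (hid_phi C)) (F_rho C ypoly)
    (pid (cp C)) (pid (cp C)) (lunit_inv (cp C)).
Proof.
  split; [apply LL1|split; [apply LL2|]]. split.
  - unfold F_lam, hid_phi. apply U1.
  - unfold F_rho. apply U2.
Qed.

Lemma F_iota_nat (C C' D D' E E' : comonoid)
       (s : poly) (phi : pmap (s ◁ cp D) (cp C ◁ s))
       (t : poly) (psi : pmap (t ◁ cp E) (cp D ◁ t))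
       (s' : poly) (phi' : pmap (s' ◁ cp D') (cp C' ◁ s'))
       (t' : poly) (psi' : pmap (t' ◁ cp E') (cp D' ◁ t'))
       (beta : pmap (cp D) (cp D'))
       (kappa : pmap (cp E) (cp E')) (gamma : pmap s s') (gamma' : pmap t t') :
       IsCofunctor E E' kappa ->
       IsEffSquare D D' E E' t psi t' psi' beta kappa gamma' ->
       iotaF C' D' E' s' phi' t' psi' ∘ F_sq E E' (gamma ⊲ gamma') kappa
       = (F_sq D D' gamma beta ⊲ F_sq E E' gamma' kappa) ∘ iotaF C D E s phi t psi.
Proof.
  intros Hk Hsq. destruct (F_square D D' E E' t psi t' psi' beta kappa gamma' Hk Hsq) as [Sq _].
  unfold F_sq in *. unfold iotaF. nrm.
  rwm (@A_nat s s' t t' (cp E) (cp E') gamma gamma' kappa).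
  rwm (cm1 (F_lam D' E' t' psi') gamma (gamma' ⊲ kappa)). rewrite <- Sq.
  rewrite (cm2 (beta ⊲ (gamma' ⊲ kappa)) gamma (F_lam D E t psi)). nrm.
  rwm (@Ai_nat s s' (cp D) (cp D') (t ◁ cp E) (t' ◁ cp E') gamma beta (gamma' ⊲ kappa)).
  reflexivity.
Qed.

Lemma F_unit_nat (C C' : comonoid) (alpha : pmap (cp C) (cp C')) :
  lunit_inv (cp C') ∘ alpha = F_sq C C' (pid ypoly) alpha ∘ lunit_inv (cp C).
Proof. apply LNat. Qed.

Lemma F_lunit_coh (C D : comonoid) (s : poly) (phi : pmap (s ◁ cp D) (cp C ◁ s)) :
  IsComonoid C -> IsComonoid D -> IsHandler C D s phi ->
  F_sq D D (lunit s) (pid (cp D))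
  = lunit (s ◁ cp D) ∘ (ceps C ⊲ pid (s ◁ cp D)) ∘ (lunit (cp C) ⊲ pid (s ◁ cp D))
    ∘ iotaF C C D ypoly (hid_phi C) s phi.
Proof.
  intros HC HD Hphi. destruct (F_bicomod C D s phi HC HD Hphi) as [L1 _].
  unfold iotaF, F_sq. nrm. rwm UI1.
  rwm (@lunit_nat (s ◁ cp D) (cp C ◁ (s ◁ cp D)) (F_lam C D s phi)).
  rewrite L1, id_l, UI2. reflexivity.
Qed.

Lemma F_runit_coh (C D : comonoid) (s : poly) (phi : pmap (s ◁ cp D) (cp C ◁ s)) :
  IsComonoid C -> IsComonoid D -> IsHandler C D s phi ->
  F_sq D D (runit s) (pid (cp D))
  = runit (s ◁ cp D) ∘ (pid (s ◁ cp D) ⊲ ceps D) ∘ (pid (s ◁ cp D) ⊲ lunit (cp D))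
    ∘ iotaF C D D s phi ypoly (hid_phi D).
Proof.
  intros HC [D1 [D2 D3]] Hphi.
  unfold iotaF, F_sq, F_lam, hid_phi. nrm.
  rwmr (@Ai_nat_r s (cp D) (ypoly ◁ cp D) (cp D) (lunit (cp D))).
  rwmr (@Ai_nat_r s (cp D) (cp D) ypoly (ceps D)).
  rewrite UJ1.
  rwmr (@tsr _ _ _ s (runit (cp D)) (pid (cp D) ⊲ ceps D)).
  rwmr (@tsr _ _ _ s (runit (cp D) ∘ (pid (cp D) ⊲ ceps D)) (pid (cp D) ⊲ lunit (cp D))).
  rwmr (@tsr _ _ _ s (runit (cp D) ∘ (pid (cp D) ⊲ ceps D) ∘ (pid (cp D) ⊲ lunit (cp D)))
          (assoc (cp D) ypoly (cp D) ∘ ((runit_inv (cp D) ∘ lunit (cp D)) ⊲ pid (cp D))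
           ∘ assoc_inv ypoly (cp D) (cp D) ∘ (pid ypoly ⊲ cdel D))).
  rewrite UJ2, D1, tri_id, id_r, UJ3. reflexivity.
Qed.

Lemma AC_struct (s t u D E G : poly) (lt : pmap (t ◁ E) (D ◁ (t ◁ E))) (lu : pmap (u ◁ G) (E ◁ (u ◁ G))) :
  assoc_inv s D ((t ◁ E) ◁ (u ◁ G))
    ∘ (pid s ⊲ (assoc D (t ◁ E) (u ◁ G) ∘ (lt ⊲ pid (u ◁ G)) ∘ assoc_inv t E (u ◁ G)
                ∘ (pid t ⊲ lu) ∘ assoc t u G))
    ∘ assoc s (t ◁ u) G ∘ (assoc s t u ⊲ pid G)
  = assoc (s ◁ D) (t ◁ E) (u ◁ G) ∘ ((assoc_inv s D (t ◁ E) ∘ (pid s ⊲ lt) ∘ assoc s t E) ⊲ pid (u ◁ G))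
    ∘ assoc_inv (s ◁ t) E (u ◁ G) ∘ (pid (s ◁ t) ⊲ lu) ∘ assoc (s ◁ t) u G.
Proof.
  transitivity (assoc_inv s D ((t ◁ E) ◁ (u ◁ G)) ∘ (pid s ⊲ assoc D (t ◁ E) (u ◁ G))
    ∘ (pid s ⊲ (lt ⊲ pid (u ◁ G))) ∘ (pid s ⊲ assoc_inv t E (u ◁ G)) ∘ (pid s ⊲ (pid t ⊲ lu))
    ∘ assoc s t (u ◁ G) ∘ assoc (s ◁ t) u G).
  - rewrite !tsr. nrm. rwmr pentagon. reflexivity.
  - symmetry. rewrite !tsl. nrm. rwm pent4. rwm (@A_nat_r s t (u ◁ G) (E ◁ (u ◁ G)) lu).
    rwmr (@Ai_nat_m s (t ◁ E) (D ◁ (t ◁ E)) (u ◁ G) lt). rwm pent3. rewrite A_Ai, id_l. reflexivity.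
Qed.

Lemma F_assoc_coh (C D E G : comonoid)
       (s : poly) (phi : pmap (s ◁ cp D) (cp C ◁ s))
       (t : poly) (psi : pmap (t ◁ cp E) (cp D ◁ t))
       (u : poly) (chi : pmap (u ◁ cp G) (cp E ◁ u)) :
       IsComonoid C -> IsComonoid D -> IsComonoid E -> IsComonoid G ->
       IsHandler C D s phi -> IsHandler D E t psi -> IsHandler E G u chi ->
       (pid (s ◁ cp D) ⊲ iotaF D E G t psi u chi)
         ∘ iotaF C D G s phi (t ◁ u) (hcomp_phi D E G t psi u chi)
         ∘ F_sq G G (assoc s t u) (pid (cp G))
       = assoc (s ◁ cp D) (t ◁ cp E) (u ◁ cp G)
         ∘ (iotaF C D E s phi t psi ⊲ pid (u ◁ cp G))
         ∘ iotaF C E G (s ◁ t) (hcomp_phi C D E s phi t psi) u chi.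
Proof.
  intros HC HD HE HG Hphi Hpsi Hchi.
  destruct (F_hcomp D E G t psi u chi HD HE HG Hpsi Hchi) as [_ [_ [HL _]]].
  set (itu := iotaF D E G t psi u chi) in *.
  set (ltu := F_lam D G (t ◁ u) (hcomp_phi D E G t psi u chi)) in *.
  unfold iotaF, F_sq. nrm.
  rwmr (@Ai_nat_r s (cp D) ((t ◁ u) ◁ cp G) ((t ◁ cp E) ◁ (u ◁ cp G)) itu).
  rwmr (@tsr _ _ _ s (pid (cp D) ⊲ itu) ltu). rewrite HL. unfold itu, iotaF. nrm.
  apply AC_struct.
Qed.

Transparent pcomp tri_map assoc assoc_inv lunit runit lunit_inv runit_inv pid.

Lemma mdir_eq {p q} (h1 h2 : pmap p q) (H : h1 = h2) x (e : dir q (mpos h1 x)) :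
  mdir h1 x e = mdir h2 x (eq_rect _ (dir q) e _ (f_equal (fun h => mpos h x) H)).
Proof. destruct H. reflexivity. Qed.

Lemma faithful_tri (s s' D D' : poly) (beta : pmap D D') (eD' : pmap D' ypoly) (d0 : pos D)
  (g g2 : pmap s s') : g ⊲ beta = g2 ⊲ beta -> g = g2.
Proof.
  intros H. destruct g as [m d], g2 as [m2 d2].
  assert (Hm : m = m2).
  { apply functional_extensionality; intro i.
    exact (f_equal (fun h : pmap (s ◁ D) (s' ◁ D') => projT1 (mpos h (existT (fun i => dir s i -> pos D) i (fun _ => d0)))) H). }
  subst m2. f_equal. apply functional_extensionality_dep; intro i.
  apply functional_extensionality; intro a'.
  set (x := existT (fun i => dir s i -> pos D) i (fun _ => d0)).
  pose proof (mdir_eq _ _ H x (existT (fun a => dir D' (mpos beta d0)) a' (mdir eD' (mpos beta d0) tt))) as K.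
  rewrite (EqdepTheory.UIP_refl _ _ (f_equal (fun h : pmap (s ◁ D) (s' ◁ D') => mpos h x) H)) in K.
  exact (f_equal (@projT1 _ _) K).
Qed.

Transparent pcomp tri_map assoc assoc_inv lunit runit lunit_inv runit_inv pid.

Lemma Y1 (C p : poly) : (pid C ⊲ runit p) ∘ assoc C p ypoly = runit (C ◁ p).
Proof. struct_tac2. Qed.
Lemma Y2 (p : poly) : runit (p ◁ ypoly) ∘ assoc_inv p ypoly ypoly ∘ (pid p ⊲ lunit_inv ypoly) = pid (p ◁ ypoly).
Proof. struct_tac2. Qed.
Lemma Y3 (p : poly) : runit_inv p ∘ runit p = pid (p ◁ ypoly).
Proof. struct_tac2. Qed.
Lemma Y4 (p : poly) : runit p ∘ runit_inv p = pid p.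
Proof. struct_tac2. Qed.
Lemma Y5 (p : poly) : (runit p ⊲ pid ypoly) ∘ assoc_inv p ypoly ypoly ∘ (pid p ⊲ lunit_inv ypoly) = pid (p ◁ ypoly).
Proof. struct_tac2. Qed.

Lemma pmap_eq_empty {p q} (h1 h2 : pmap p q) :
  (forall j, dir q j -> False) -> (forall x, mpos h1 x = mpos h2 x) -> h1 = h2.
Proof.
  intros Hq Hm. destruct h1 as [m1 d1], h2 as [m2 d2]; simpl in *.
  assert (m1 = m2) by (apply functional_extensionality; exact Hm). subst m2.
  f_equal. apply functional_extensionality_dep; intro x. apply functional_extensionality; intro e.
  exfalso; exact (Hq _ e).
Qed.

Opaque pcomp tri_map assoc assoc_inv lunit runit lunit_inv runit_inv pid.

Lemma Yrhs (C p : poly) (X : pmap (p ◁ ypoly) (C ◁ p)) :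
  (pid C ⊲ runit p) ∘ assoc C p ypoly ∘ (X ⊲ pid ypoly) ∘ assoc_inv p ypoly ypoly ∘ (pid p ⊲ lunit_inv ypoly)
  = X.
Proof.
  rewrite Y1. rwm (@runit_nat _ _ X). rwm Y2. apply id_r.
Qed.

Lemma ess_y (C : comonoid) (p : poly) (lam : pmap p (cp C ◁ p)) (rho : pmap p (p ◁ cp y_comonoid)) :
  IsComonoid C -> IsBicomodule C y_comonoid p lam rho ->
  exists (s : poly) (phi : pmap (s ◁ cp y_comonoid) (cp C ◁ s)),
    IsHandler C y_comonoid s phi /\
    exists (g : pmap (s ◁ cp y_comonoid) p) (g_inv : pmap p (s ◁ cp y_comonoid)),
      g ∘ g_inv = pid p /\ g_inv ∘ g = pid (s ◁ cp y_comonoid) /\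
      IsBicomodSquare C C y_comonoid y_comonoid
        (s ◁ cp y_comonoid) (F_lam C y_comonoid s phi) (F_rho y_comonoid s) p lam rho
        (pid (cp C)) (pid (cp y_comonoid)) g.
Proof.
  intros HC [L1 [L2 [R1 [R2 R5]]]].
  unfold IsHandler, IsBicomodSquare, F_lam, F_rho in *. cbn [cp ceps cdel y_comonoid] in *.
  rewrite tri_id, id_r in R1.
  assert (Hrho : rho = runit_inv p).
  { rewrite <- (id_l rho), <- Y3. nrm. rwm R1. apply id_r. }
  exists p, (lam ∘ runit p). split; [split|].
  - nrm. rewrite L1, id_l, tri_id, id_r. reflexivity.
  - nrm. rewrite L2. rewrite (tsr lam (runit p)). nrm. rwm Yrhs. reflexivity.
  - exists (runit p), (runit_inv p). split; [apply Y4|split; [apply Y3|split]].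
    + nrm. apply Yrhs.
    + rewrite Hrho, Y3. nrm. apply Y5.
Qed.

Transparent pcomp tri_map assoc assoc_inv lunit runit lunit_inv runit_inv pid.

Lemma ess_zero (C : comonoid) (p : poly) (lam : pmap p (cp C ◁ p)) (rho : pmap p (p ◁ cp zero_comonoid)) :
  IsComonoid C -> IsBicomodule C zero_comonoid p lam rho ->
  exists (s : poly) (phi : pmap (s ◁ cp zero_comonoid) (cp C ◁ s)),
    IsHandler C zero_comonoid s phi /\
    exists (g : pmap (s ◁ cp zero_comonoid) p) (g_inv : pmap p (s ◁ cp zero_comonoid)),
      g ∘ g_inv = pid p /\ g_inv ∘ g = pid (s ◁ cp zero_comonoid) /\
      IsBicomodSquare C C zero_comonoid zero_comonoid
        (s ◁ cp zero_comonoid) (F_lam C zero_comonoid s phi) (F_rho zero_comonoid s) p lam rho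
        (pid (cp C)) (pid (cp zero_comonoid)) g.
Proof.
  intros HC [L1 [L2 [R1 [R2 R5]]]].
  assert (Hpos : forall i, projT1 (mpos rho i) = i).
  { intro i. exact (f_equal (fun h : pmap p p => mpos h i) R1). }
  set (emp := fun i (a : dir p i) =>
         (projT2 (mpos rho i) (eq_rect _ (dir p) a _ (eq_sym (Hpos i))) : Empty_set)).
  assert (Ep : forall j, dir p j -> False) by (intros j a; destruct (emp j a)).
  assert (Ep0 : forall j, dir (p ◁ cp zero_comonoid) j -> False) by (intros j e; exact (Ep _ (projT1 e))).
  assert (ECp : forall j, dir (cp C ◁ p) j -> False) by (intros j e; exact (Ep _ (projT2 e))).
  assert (ECCp : forall j, dir (cp C ◁ (cp C ◁ p)) j -> False) by (intros j e; exact (ECp _ (projT2 e))).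
  set (gz := {| mpos := fun x : pos (p ◁ cp zero_comonoid) => projT1 x;
                mdir := fun (x : pos (p ◁ cp zero_comonoid)) (a : dir p (projT1 x)) =>
                  match projT2 x a return dir (p ◁ cp zero_comonoid) x with end |}
             : pmap (p ◁ cp zero_comonoid) p).
  set (gzi := {| mpos := fun i => existT (fun i => dir p i -> pos zpoly) i (emp i);
                 mdir := fun i (e : dir (p ◁ cp zero_comonoid) (existT (fun i => dir p i -> pos zpoly) i (emp i))) => projT1 e |}
             : pmap p (p ◁ cp zero_comonoid)).
  exists p, (lam ∘ gz). split; [split|].
  - apply pmap_eq_empty; [exact Ep|]. intros [i f]. exact (f_equal (fun h : pmap p p => mpos h i) L1).
  - apply pmap_eq_empty; [exact ECCp|]. intros [i f].
    exact (f_equal (fun h : pmap p (cp C ◁ (cp C ◁ p)) => mpos h i) L2).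
  - exists gz, gzi. split; [|split; [|split]].
    + apply pmap_eq_empty; [exact Ep|]. intro i. reflexivity.
    + apply pmap_eq_empty; [exact Ep0|]. intros [i f]. cbn.
      f_equal. apply functional_extensionality; intro a. destruct (f a).
    + apply pmap_eq_empty; [exact ECp|]. intros [i f]. cbn.
      destruct (mpos lam i); reflexivity.
    + apply pmap_eq_empty; [exact Ep0|]. intros [i f].
      assert (SE : forall x y : {i : pos p & dir p i -> Empty_set}, projT1 x = projT1 y -> x = y).
      { intros [i1 f1] [i2 f2]; simpl; intros <-. f_equal. apply functional_extensionality; intro a.
        destruct (f1 a). }
      apply SE. exact (eq_sym (Hpos i)).
Qed.

Transparent pcomp tri_map assoc assoc_inv lunit runit lunit_inv runit_inv pid.
Theorem mainTheorem8 :
  (** (1) a pseudo-double functor F : Eff -> Cat#, identity on objects and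
      vertical morphisms, with the prescribed action on handlers and squares *)
  ( (* F(s,phi) is a (C,D)-bicomodule *)
    (forall (C D : comonoid) (s : poly) (phi : pmap (s ◁ cp D) (cp C ◁ s)),
       IsComonoid C -> IsComonoid D -> IsHandler C D s phi ->
       IsBicomodule C D (s ◁ cp D) (F_lam C D s phi) (F_rho D s))
    (* F(gamma) = gamma ◁ beta is a square of Cat# *)
 /\ (forall (C C' D D' : comonoid)
       (s : poly) (phi : pmap (s ◁ cp D) (cp C ◁ s))
       (s' : poly) (phi' : pmap (s' ◁ cp D') (cp C' ◁ s'))
       (alpha : pmap (cp C) (cp C')) (beta : pmap (cp D) (cp D')) (gamma : pmap s s'),
       IsComonoid C -> IsComonoid C' -> IsComonoid D -> IsComonoid D' ->
       IsHandler C D s phi -> IsHandler C' D' s' phi' ->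
       IsCofunctor C C' alpha -> IsCofunctor D D' beta ->
       IsEffSquare C C' D D' s phi s' phi' alpha beta gamma ->
       IsBicomodSquare C C' D D'
         (s ◁ cp D) (F_lam C D s phi) (F_rho D s)
         (s' ◁ cp D') (F_lam C' D' s' phi') (F_rho D' s')
         alpha beta (F_sq D D' gamma beta))
    (* F preserves vertical identities and vertical composition of squares *)
 /\ (forall (D : comonoid) (s : poly),
       F_sq D D (pid s) (pid (cp D)) = pid (s ◁ cp D))
 /\ (forall (D D' D'' : comonoid) (s s' s'' : poly)
       (gamma : pmap s s') (gamma' : pmap s' s'')
       (beta : pmap (cp D) (cp D')) (beta' : pmap (cp D') (cp D'')),
       F_sq D D'' (gamma' ∘ gamma) (beta' ∘ beta)
       = F_sq D' D'' gamma' beta' ∘ F_sq D D' gamma beta)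
    (* compositor and unitor, natural and coherent *)
 /\ exists (iota : forall (C D E : comonoid)
                     (s : poly) (phi : pmap (s ◁ cp D) (cp C ◁ s))
                     (t : poly) (psi : pmap (t ◁ cp E) (cp D ◁ t)),
                     pmap ((s ◁ t) ◁ cp E) ((s ◁ cp D) ◁ (t ◁ cp E)))
           (eta : forall C : comonoid, pmap (cp C) (ypoly ◁ cp C))
           (eta_inv : forall C : comonoid, pmap (ypoly ◁ cp C) (cp C)),
    (* compositor: F(s ◁ t) is the horizontal composite F(s) ◁_D F(t) *)
    (forall (C D E : comonoid)
       (s : poly) (phi : pmap (s ◁ cp D) (cp C ◁ s))
       (t : poly) (psi : pmap (t ◁ cp E) (cp D ◁ t)),
       IsComonoid C -> IsComonoid D -> IsComonoid E ->
       IsHandler C D s phi -> IsHandler D E t psi ->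
       IsHComposite C D E
         (s ◁ cp D) (F_lam C D s phi) (F_rho D s)
         (t ◁ cp E) (F_lam D E t psi) (F_rho E t)
         ((s ◁ t) ◁ cp E) (F_lam C E (s ◁ t) (hcomp_phi C D E s phi t psi)) (F_rho E (s ◁ t))
         (iota C D E s phi t psi))
    (* unitor: invertible globular square  id_C  =>  F(y, id_C) *)
 /\ (forall C : comonoid, IsComonoid C ->
       eta C ∘ eta_inv C = pid (ypoly ◁ cp C) /\
       eta_inv C ∘ eta C = pid (cp C) /\
       IsBicomodSquare C C C C
         (cp C) (cdel C) (cdel C)
         (ypoly ◁ cp C) (F_lam C C ypoly (hid_phi C)) (F_rho C ypoly)
         (pid (cp C)) (pid (cp C)) (eta C))
    (* naturality of the compositor w.r.t. horizontal composition of squares *)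
 /\ (forall (C C' D D' E E' : comonoid)
       (s : poly) (phi : pmap (s ◁ cp D) (cp C ◁ s))
       (t : poly) (psi : pmap (t ◁ cp E) (cp D ◁ t))
       (s' : poly) (phi' : pmap (s' ◁ cp D') (cp C' ◁ s'))
       (t' : poly) (psi' : pmap (t' ◁ cp E') (cp D' ◁ t'))
       (alpha : pmap (cp C) (cp C')) (beta : pmap (cp D) (cp D'))
       (kappa : pmap (cp E) (cp E')) (gamma : pmap s s') (gamma' : pmap t t'),
       IsComonoid C -> IsComonoid C' -> IsComonoid D -> IsComonoid D' ->
       IsComonoid E -> IsComonoid E' ->
       IsHandler C D s phi -> IsHandler D E t psi ->
       IsHandler C' D' s' phi' -> IsHandler D' E' t' psi' ->
       IsCofunctor C C' alpha -> IsCofunctor D D' beta -> IsCofunctor E E' kappa ->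
       IsEffSquare C C' D D' s phi s' phi' alpha beta gamma ->
       IsEffSquare D D' E E' t psi t' psi' beta kappa gamma' ->
       iota C' D' E' s' phi' t' psi' ∘ F_sq E E' (gamma ⊲ gamma') kappa
       = (F_sq D D' gamma beta ⊲ F_sq E E' gamma' kappa) ∘ iota C D E s phi t psi)
    (* naturality of the unitor w.r.t. vertical morphisms *)
 /\ (forall (C C' : comonoid) (alpha : pmap (cp C) (cp C')),
       IsComonoid C -> IsComonoid C' -> IsCofunctor C C' alpha ->
       eta C' ∘ alpha = F_sq C C' (pid ypoly) alpha ∘ eta C)
    (* associativity coherence *)
 /\ (forall (C D E G : comonoid)
       (s : poly) (phi : pmap (s ◁ cp D) (cp C ◁ s))
       (t : poly) (psi : pmap (t ◁ cp E) (cp D ◁ t))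
       (u : poly) (chi : pmap (u ◁ cp G) (cp E ◁ u)),
       IsComonoid C -> IsComonoid D -> IsComonoid E -> IsComonoid G ->
       IsHandler C D s phi -> IsHandler D E t psi -> IsHandler E G u chi ->
       (pid (s ◁ cp D) ⊲ iota D E G t psi u chi)
         ∘ iota C D G s phi (t ◁ u) (hcomp_phi D E G t psi u chi)
         ∘ F_sq G G (assoc s t u) (pid (cp G))
       = assoc (s ◁ cp D) (t ◁ cp E) (u ◁ cp G)
         ∘ (iota C D E s phi t psi ⊲ pid (u ◁ cp G))
         ∘ iota C E G (s ◁ t) (hcomp_phi C D E s phi t psi) u chi)
    (* left unit coherence *)
 /\ (forall (C D : comonoid) (s : poly) (phi : pmap (s ◁ cp D) (cp C ◁ s)),
       IsComonoid C -> IsComonoid D -> IsHandler C D s phi ->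
       F_sq D D (lunit s) (pid (cp D))
       = lunit (s ◁ cp D) ∘ (ceps C ⊲ pid (s ◁ cp D)) ∘ (eta_inv C ⊲ pid (s ◁ cp D))
         ∘ iota C C D ypoly (hid_phi C) s phi)
    (* right unit coherence *)
 /\ (forall (C D : comonoid) (s : poly) (phi : pmap (s ◁ cp D) (cp C ◁ s)),
       IsComonoid C -> IsComonoid D -> IsHandler C D s phi ->
       F_sq D D (runit s) (pid (cp D))
       = runit (s ◁ cp D) ∘ (pid (s ◁ cp D) ⊲ ceps D) ∘ (pid (s ◁ cp D) ⊲ eta_inv D)
         ∘ iota C D D s phi ypoly (hid_phi D)) )
  (** (2) F is faithful on horizontal morphisms and squares between
      nonempty categories (d <> 0) *)
  /\ (forall (C C' D D' : comonoid)
        (s : poly) (phi : pmap (s ◁ cp D) (cp C ◁ s))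
        (s' : poly) (phi' : pmap (s' ◁ cp D') (cp C' ◁ s'))
        (alpha alpha2 : pmap (cp C) (cp C')) (beta beta2 : pmap (cp D) (cp D'))
        (gamma gamma2 : pmap s s'),
        IsComonoid C -> IsComonoid C' -> IsComonoid D -> IsComonoid D' ->
        inhabited (pos (cp D)) -> inhabited (pos (cp D')) ->
        IsHandler C D s phi -> IsHandler C' D' s' phi' ->
        IsCofunctor C C' alpha -> IsCofunctor D D' beta ->
        IsCofunctor C C' alpha2 -> IsCofunctor D D' beta2 ->
        IsEffSquare C C' D D' s phi s' phi' alpha beta gamma ->
        IsEffSquare C C' D D' s phi s' phi' alpha2 beta2 gamma2 ->
        alpha = alpha2 -> beta = beta2 ->
        F_sq D D' gamma beta = F_sq D D' gamma2 beta2 ->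
        gamma = gamma2)
  (** (3) every (C,0)- and every (C,y)-bicomodule is in the essential image *)
  /\ (forall (C D : comonoid) (p : poly)
        (lam : pmap p (cp C ◁ p)) (rho : pmap p (p ◁ cp D)),
        D = zero_comonoid \/ D = y_comonoid ->
        IsComonoid C -> IsBicomodule C D p lam rho ->
        exists (s : poly) (phi : pmap (s ◁ cp D) (cp C ◁ s)),
          IsHandler C D s phi /\
          exists (g : pmap (s ◁ cp D) p) (g_inv : pmap p (s ◁ cp D)),
            g ∘ g_inv = pid p /\ g_inv ∘ g = pid (s ◁ cp D) /\
            IsBicomodSquare C C D D
              (s ◁ cp D) (F_lam C D s phi) (F_rho D s) p lam rho
              (pid (cp C)) (pid (cp D)) g).
Proof.
  split; [|split].
  - split; [exact F_bicomod|]. split.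
    { intros C C' D D' s phi s' phi' alpha beta gamma _ _ _ _ _ _ _ Hb Hsq.
      exact (F_square C C' D D' s phi s' phi' alpha beta gamma Hb Hsq). }
    split; [intros D s; unfold F_sq; apply tri_id|]. split.
    { intros. unfold F_sq. symmetry. apply tri_comp. }
    exists iotaF, (fun C => lunit_inv (cp C)), (fun C => lunit (cp C)).
    split; [|split; [|split; [|split; [|split; [|split]]]]].
    + intros. apply F_hcomp; assumption.
    + intros C HC. apply F_unitor.
    + intros C C' D D' E E' s phi t psi s' phi' t' psi' alpha beta kappa gamma gamma'
        _ _ _ _ _ _ _ _ _ _ _ _ Hk _ Hsq'.
      apply F_iota_nat; assumption.
    + intros C C' alpha _ _ _. apply F_unit_nat.
    + intros. apply F_assoc_coh; assumption.
    + intros. apply F_lunit_coh; assumption.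
    + intros. apply F_runit_coh; assumption.
  - intros C C' D D' s phi s' phi' alpha alpha2 beta beta2 gamma gamma2
      _ _ _ _ HiD HiD' _ _ _ _ _ _ _ _ Ha Hbeta Hf.
    subst alpha2 beta2. destruct HiD as [d0].
    unfold F_sq in Hf. exact (faithful_tri s s' (cp D) (cp D') beta (ceps D') d0 gamma gamma2 Hf).
  - intros C D p lam rho [-> | ->] HC Hb.
    + apply ess_zero; assumption.
    + apply ess_y; assumption.
Qed.
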